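(* Let $Q$ be a countable quandle which is semi-latin at $\hat q\in Q$, equipped with a circular order or a right order, and let $(q_i)_{i\ge1}$ be an enumeration of $Q$ with $q_1=\hat q$. Then the dynamical realization $\rho$ constructed from $(q_i)$ acts freely on $\iota(\hat q)$, i.e. for $q\ne r$ in $Q$ one has $\rho(q)(\iota(\hat q))\neq\rho(r)(\iota(\hat q))$.
   Context: Quandle: set with operation $*$ satisfying $q*q=q$, unique right division, and $(q*r)*s=(q*s)*(r*s)$. Semi-latin at $\hat q$: $r\mapsto\hat q*r$ is injective. A circular order is $c:Q^3\to\{-1,0,1\}$ vanishing exactly on triples with a repeated entry, satisfying $c(q_2,q_3,q_4)-c(q_1,q_3,q_4)+c(q_1,q_2,q_4)-c(q_1,q_2,q_3)=0$ and $c(q_1*q,q_2*q,q_3*q)=c(q_1,q_2,q_3)$. A right order is a total order with $q_1<q_2\Rightarrow q_1*q<q_2*q$. Dynamical realization (circular case): define $\iota:Q\to S^1$ by choosing distinct $\iota(q_1),\iota(q_2)$ and letting $\iota(q_n)$ be the midpoint of the unique component of $S^1\setminus\{\iota(q_1),\dots,\iota(q_{n-1})\}$ with $c(q_i,q_j,q_k)=\mathrm{ord}(\iota(q_i),\iota(q_j),\iota(q_k))$ for all $i,j,k\le n$ ($\mathrm{ord}$ the standard cyclic orientation). Right order case: $\iota:Q\to\mathbb{R}$, $\iota(q_1)$ arbitrary, $\iota(q_n)$ equal to (minimum previous value)$-1$, (maximum previous value)$+1$, or the midpoint of its immediate neighbours' values according to the position of $q_n$ among $q_1,\dots,q_{n-1}$.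 In both cases $\rho(q)(\iota(r))=\iota(r*q)$ on $\iota(Q)$, extended continuously to the closure and affinely on complementary intervals. *)

(* Defs.v *)
From Stdlib Require Import Reals ZArith.
Open Scope R_scope.

Definition is_quandle {Q : Type} (op : Q -> Q -> Q) : Prop :=
  (forall q, op q q = q) /\
  (forall q r, exists! s, op s r = q) /\
  (forall q r s, op (op q r) s = op (op q s) (op r s)).

Definition semi_latin_at {Q : Type} (op : Q -> Q -> Q) (qhat : Q) : Prop :=
  forall r s, op qhat r = op qhat s -> r = s.

Definition is_circular_order {Q : Type} (op : Q -> Q -> Q) (c : Q -> Q -> Q -> Z) : Prop :=
  (forall a b d, c a b d = (-1)%Z \/ c a b d = 0%Z \/ c a b d = 1%Z) /\
  (forall a b d, c a b d = 0%Z <-> (a = b \/ b = d \/ a = d)) /\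
  (forall q1 q2 q3 q4,
      (c q2 q3 q4 - c q1 q3 q4 + c q1 q2 q4 - c q1 q2 q3)%Z = 0%Z) /\
  (forall q1 q2 q3 q, c (op q1 q) (op q2 q) (op q3 q) = c q1 q2 q3).

Definition is_right_order {Q : Type} (op : Q -> Q -> Q) (lt : Q -> Q -> Prop) : Prop :=
  (forall a, ~ lt a a) /\
  (forall a b d, lt a b -> lt b d -> lt a d) /\
  (forall a b, a <> b -> lt a b \/ lt b a) /\
  (forall a b q, lt a b -> lt (op a q) (op b q)).

(** Enumeration of Q indexed by an initial segment D of nat (D = all of nat
    when Q is infinite); index 0 plays the role of the paper's index 1. *)
Definition is_enumeration {Q : Type} (D : nat -> Prop) (e : nat -> Q) : Prop :=
  D 0%nat /\
  (forall n m, (m <= n)%nat -> D n -> D m) /\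
  (forall n m, D n -> D m -> e n = e m -> n = m) /\
  (forall x, exists n, D n /\ e n = x).

(** The circle S^1 = R/Z is represented by [0,1); increasing parameter is the
    standard (counterclockwise) orientation. *)
Definition on_circle (x : R) : Prop := 0 <= x < 1.

Definition ord (a b d : R) : Z :=
  if Req_EM_T a b then 0%Z else if Req_EM_T b d then 0%Z else
  if Req_EM_T a d then 0%Z else
  if Rlt_dec a b then
    (if Rlt_dec b d then 1%Z else if Rlt_dec d a then 1%Z else (-1)%Z)
  else
    (if Rlt_dec b d then (if Rlt_dec d a then 1%Z else (-1)%Z) else (-1)%Z).

(** Midpoint of the counterclockwise open arc from a to b (a <> b) in [0,1). *)
Definition arcmid (a b : R) : R :=
  if Rlt_dec a b then (a + b) / 2
  else let m := (a + b + 1) / 2 in if Rlt_dec m 1 then m else m - 1.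

Definition is_circ_realization {Q : Type} (c : Q -> Q -> Q -> Z)
    (D : nat -> Prop) (e : nat -> Q) (iota : Q -> R) : Prop :=
  (forall x, on_circle (iota x)) /\
  (D 1%nat -> iota (e 0%nat) <> iota (e 1%nat)) /\
  (forall n, (2 <= n)%nat -> D n ->
     exists i j, (i < n)%nat /\ (j < n)%nat /\ iota (e i) <> iota (e j) /\
       (* the ccw arc from iota(e i) to iota(e j) contains no earlier point:
          it is a component of S^1 minus the earlier points *)
       (forall k, (k < n)%nat -> ord (iota (e i)) (iota (e k)) (iota (e j)) <> 1%Z) /\
       iota (e n) = arcmid (iota (e i)) (iota (e j)) /\
       (forall a b d, (a <= n)%nat -> (b <= n)%nat -> (d <= n)%nat ->
          c (e a) (e b) (e d) = ord (iota (e a)) (iota (e b)) (iota (e d)))).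

Definition is_right_realization {Q : Type} (lt : Q -> Q -> Prop)
    (D : nat -> Prop) (e : nat -> Q) (iota : Q -> R) : Prop :=
  forall n, (1 <= n)%nat -> D n ->
    ((forall i, (i < n)%nat -> lt (e n) (e i)) ->
       exists i, (i < n)%nat /\ (forall j, (j < n)%nat -> iota (e i) <= iota (e j)) /\
                 iota (e n) = iota (e i) - 1) /\
    ((forall i, (i < n)%nat -> lt (e i) (e n)) ->
       exists i, (i < n)%nat /\ (forall j, (j < n)%nat -> iota (e j) <= iota (e i)) /\
                 iota (e n) = iota (e i) + 1) /\
    ((exists i, (i < n)%nat /\ lt (e i) (e n)) ->
     (exists j, (j < n)%nat /\ lt (e n) (e j)) ->
       exists i j, (i < n)%nat /\ (j < n)%nat /\ lt (e i) (e n) /\ lt (e n) (e j) /\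
         (forall k, (k < n)%nat ->
            ~ (lt (e i) (e k) /\ lt (e k) (e n)) /\ ~ (lt (e n) (e k) /\ lt (e k) (e j))) /\
         iota (e n) = (iota (e i) + iota (e j)) / 2).

Definition rho_on_image {Q : Type} (op : Q -> Q -> Q) (iota : Q -> R)
    (rho : Q -> R -> R) : Prop :=
  forall q r, rho q (iota r) = iota (op r q).

(* Main.v *)
Require Import Defs.
From Stdlib Require Import Reals ZArith Lia Lra Classical.
Open Scope R_scope.

Lemma right_mono (Q : Type) (op : Q -> Q -> Q) (lt : Q -> Q -> Prop) D e iota :
  is_right_order op lt -> is_enumeration D e -> is_right_realization lt D e iota ->
  forall n, D n -> forall i j, (i <= n)%nat -> (j <= n)%nat -> lt (e i) (e j) ->
  iota (e i) < iota (e j).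
Proof.
intros [Hirr [Htr [Htot _]]] [HD0 [Hdown [Hinj _]]] Hreal.
induction n as [|n IH]; intros Hn i j Hi Hj Hlt.
- assert (i = 0)%nat by lia; assert (j = 0)%nat by lia; subst.
  exfalso; apply (Hirr _ Hlt).
- assert (HDn : D n) by (apply (Hdown (S n)); [lia|exact Hn]).
  specialize (IH HDn).
  assert (HDk : forall k, (k <= S n)%nat -> D k) by (intros k Hk; apply (Hdown (S n)); auto).
  assert (Hnew : forall k, (k <= n)%nat ->
     (lt (e k) (e (S n)) -> iota (e k) < iota (e (S n))) /\
     (lt (e (S n)) (e k) -> iota (e (S n)) < iota (e k))).
  { destruct (Hreal (S n) ltac:(lia) Hn) as [Hmin [Hmax Hmid]].
    assert (Hne : forall k, (k <= n)%nat -> e k <> e (S n)).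
    { intros k Hk E. apply Hinj in E; [lia| apply HDk; lia | exact Hn]. }
    destruct (classic (exists i, (i < S n)%nat /\ lt (e i) (e (S n)))) as [Hl|Hl];
    destruct (classic (exists j, (j < S n)%nat /\ lt (e (S n)) (e j))) as [Hg|Hg].
    + destruct (Hmid Hl Hg) as [a [b [Ha [Hb [Hla [Hlb [Hno Heq]]]]]]].
      assert (Hab: iota (e a) < iota (e b)) by (apply IH; try lia; eapply Htr; eauto).
      intros k Hk; split; intro Hk'.
      * destruct (Nat.eq_dec k a) as [->|Hka]; [lra|].
        assert (Hea : e k <> e a) by
          (intro E; apply Hinj in E; [lia| apply HDk; lia | apply HDk; lia]).
        destruct (Htot _ _ Hea) as [H1|H1].
        -- assert (iota (e k) < iota (e a)) by (apply IH; auto; lia). lra.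
        -- exfalso. apply (proj1 (Hno k ltac:(lia))). auto.
      * destruct (Nat.eq_dec k b) as [->|Hkb]; [lra|].
        assert (Heb : e k <> e b) by
          (intro E; apply Hinj in E; [lia| apply HDk; lia | apply HDk; lia]).
        destruct (Htot _ _ Heb) as [H1|H1].
        -- exfalso. apply (proj2 (Hno k ltac:(lia))). auto.
        -- assert (iota (e b) < iota (e k)) by (apply IH; auto; lia). lra.
    + assert (Hall : forall i, (i < S n)%nat -> lt (e i) (e (S n))).
      { intros i0 Hi0; destruct (Htot (e i0) (e (S n)) (Hne i0 ltac:(lia))) as [H|H]; auto.
        exfalso; apply Hg; eauto. }
      destruct (Hmax Hall) as [m [Hm [Hmaxm Heq]]].
      intros k Hk; split; intro Hk'.
      * pose proof (Hmaxm k ltac:(lia)). lra.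
      * exfalso; apply Hg; exists k; split; [lia|auto].
    + assert (Hall : forall i, (i < S n)%nat -> lt (e (S n)) (e i)).
      { intros i0 Hi0; destruct (Htot (e i0) (e (S n)) (Hne i0 ltac:(lia))) as [H|H]; auto.
        exfalso; apply Hl; eauto. }
      destruct (Hmin Hall) as [m [Hm [Hminm Heq]]].
      intros k Hk; split; intro Hk'.
      * exfalso; apply Hl; exists k; split; [lia|auto].
      * pose proof (Hminm k ltac:(lia)). lra.
    + exfalso. destruct (Htot (e 0%nat) (e (S n)) (Hne 0%nat ltac:(lia))) as [H|H].
      * apply Hl; exists 0%nat; split; [lia|auto].
      * apply Hg; exists 0%nat; split; [lia|auto]. }
  destruct (Nat.eq_dec i (S n)) as [->|Hin]; destruct (Nat.eq_dec j (S n)) as [->|Hjn].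
  + exfalso; apply (Hirr _ Hlt).
  + apply (proj2 (Hnew j ltac:(lia))); auto.
  + apply (proj1 (Hnew i ltac:(lia))); auto.
  + apply IH; auto; lia.
Qed.

Lemma right_inj (Q : Type) (op : Q -> Q -> Q) (lt : Q -> Q -> Prop) D e iota :
  is_right_order op lt -> is_enumeration D e -> is_right_realization lt D e iota ->
  forall x y, x <> y -> iota x <> iota y.
Proof.
intros Ho He Hr x y Hxy E.
pose proof (right_mono Q op lt D e iota Ho He Hr) as M.
destruct Ho as [_ [_ [Htot _]]].
destruct He as [HD0 [Hdown [Hinj Hsurj]]].
destruct (Hsurj x) as [a [Ha <-]]; destruct (Hsurj y) as [b [Hb <-]].
assert (HDn : D (max a b)) by
  (destruct (Nat.le_ge_cases a b); [rewrite Nat.max_r|rewrite Nat.max_l]; auto).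
destruct (Htot _ _ Hxy) as [H|H].
- pose proof (M _ HDn a b (Nat.le_max_l _ _) (Nat.le_max_r _ _) H). lra.
- pose proof (M _ HDn b a (Nat.le_max_r _ _) (Nat.le_max_l _ _) H). lra.
Qed.

Lemma circ_inj (Q : Type) (op : Q -> Q -> Q) c D e iota :
  is_circular_order op c -> is_enumeration D e -> is_circ_realization c D e iota ->
  forall x y, x <> y -> iota x <> iota y.
Proof.
intros [_ [Hz _]] [HD0 [Hdown [Hinj Hsurj]]] [_ [H01 Hgen]] x y Hxy E.
destruct (Hsurj x) as [a [Ha <-]]; destruct (Hsurj y) as [b [Hb <-]].
assert (Hab : a <> b) by (intro; subst; auto).
assert (HDn : D (max a b)) by
  (destruct (Nat.le_ge_cases a b); [rewrite Nat.max_r|rewrite Nat.max_l]; auto).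
destruct (le_lt_dec 2 (max a b)) as [l|l].
- destruct (Hgen _ l HDn) as [i [j [_ [_ [_ [_ [_ Hc]]]]]]].
  assert (Hd : exists d, (d <= 2 /\ d <> a /\ d <> b)%nat).
  { destruct (Nat.eq_dec a 0); destruct (Nat.eq_dec b 0);
    destruct (Nat.eq_dec a 1); destruct (Nat.eq_dec b 1);
    try (exists 0%nat; lia); try (exists 1%nat; lia); exists 2%nat; lia. }
  destruct Hd as [d [Hd1 [Hd2 Hd3]]].
  assert (HDd : D d) by (apply (Hdown (max a b)); [lia|auto]).
  specialize (Hc a b d (Nat.le_max_l _ _) (Nat.le_max_r _ _) ltac:(lia)).
  assert (Hord : ord (iota (e a)) (iota (e b)) (iota (e d)) = 0%Z).
  { unfold ord. destruct (Req_EM_T _ _); [reflexivity|congruence]. }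
  rewrite Hord in Hc. apply Hz in Hc.
  destruct Hc as [H|[H|H]]; apply Hinj in H; auto; lia.
- assert (HD1 : D 1%nat) by (apply (Hdown (max a b)); [lia|auto]).
  apply H01 in HD1.
  destruct a as [|[|a]]; destruct b as [|[|b]]; try lia; auto.
Qed.

Theorem proposition3p7 :
  forall (Q : Type) (op : Q -> Q -> Q) (qhat : Q)
         (D : nat -> Prop) (e : nat -> Q),
    is_quandle op ->
    semi_latin_at op qhat ->
    is_enumeration D e ->
    e 0%nat = qhat ->
    (* circular order case *)
    (forall (c : Q -> Q -> Q -> Z) (iota : Q -> R) (rho : Q -> R -> R),
        is_circular_order op c ->
        is_circ_realization c D e iota ->
        rho_on_image op iota rho ->
        forall q r, q <> r -> rho q (iota qhat) <> rho r (iota qhat)) /\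
    (* right order case *)
    (forall (lt : Q -> Q -> Prop) (iota : Q -> R) (rho : Q -> R -> R),
        is_right_order op lt ->
        is_right_realization lt D e iota ->
        rho_on_image op iota rho ->
        forall q r, q <> r -> rho q (iota qhat) <> rho r (iota qhat)).
Proof.
intros Q op qhat D e _ Hsl He _; split.
- intros c iota rho Hc Hr Hrho q r Hqr.
  rewrite !Hrho. apply (circ_inj Q op c D e iota Hc He Hr).
  intro E; apply Hqr, Hsl, E.
- intros lt iota rho Hc Hr Hrho q r Hqr.
  rewrite !Hrho. apply (right_inj Q op lt D e iota Hc He Hr).
  intro E; apply Hqr, Hsl, E.
Qed.
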